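(* Let $(\theta_1,\theta_2)$, $K_2$ be as in the normal form: on a domain in the $(x,z)$-half-plane $z>0$, $$\theta_1=\frac{dx}{z},\qquad \theta_2=\frac{dz-(\mu(x)z^2+1)dx}{z},\qquad K_2=1-\mu(x)z^2,$$ with $\mu$ a smooth function of one variable. Consider the linear system for functions $a,b,p$: $$da=(2a+p+1)\theta_1,\qquad db=-2b(K_2-1)\theta_1+(2b-p+1)\theta_2,\qquad dp=-\bigl(2b+(K_2-2)(p-1)\bigr)\theta_1+(2a+p+1)\theta_2.$$ Assume the domain is connected and its projection to the $x$-axis is an interval. Then $(a,b,p)$ is a solution if and only if $$a=-1+f(x),\qquad b=-(1+\mu(x)z^2)f(x)+z f'(x)-\tfrac12 z^2 f''(x),\qquad p=1-2f(x)+zf'(x),$$ for a function $f$ satisfying $f'''+4\mu f'+2\mu' f=0$. The general such $f$ is $$f=-c_0\phi_0^2-2c_1\phi_0\phi_1-c_2\phi_1^2,$$ with constants $c_0,c_1,c_2$, where $(\phi_0,\phi_1)$ is any pair of solutions of $\phi''+\mu\phi=0$ satisfying $\phi_0\phi_1'-\phi_1\phi_0'=1$.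
   Context: This linear system is the specialization, under $K_1\equiv1$ (Type I), of the system governing realizations of an endomorphism field with the given coframing. In that correspondence, positive solutions $a,b$ give realizations. *)

(* Defs.v *)
From Stdlib Require Import Reals.
From Coquelicot Require Import Coquelicot.
Open Scope R_scope.

(** Points of the (x,z)-plane are pairs of reals; a subset is a predicate
    [U : R -> R -> Prop].  A 1-form [c_x dx + c_z dz] at a point is the pair
    of its coefficients [(c_x, c_z)]. *)

Definition open2 (U : R -> R -> Prop) : Prop :=
  forall x z, U x z -> exists eps : R, 0 < eps /\
    forall u v, Rabs (u - x) < eps -> Rabs (v - z) < eps -> U u v.

Definition connected2 (U : R -> R -> Prop) : Prop :=
  forall V W : R -> R -> Prop, open2 V -> open2 W ->
    (forall x z, U x z -> V x z \/ W x z) ->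
    (forall x z, U x z -> V x z -> W x z -> False) ->
    (forall x z, U x z -> V x z) \/ (forall x z, U x z -> W x z).

Definition domain2 (U : R -> R -> Prop) : Prop := open2 U /\ connected2 U.

Definition projx (U : R -> R -> Prop) (x : R) : Prop := exists z, U x z.

Definition is_interval (I : R -> Prop) : Prop :=
  forall x1 x2 x, I x1 -> I x2 -> x1 <= x -> x <= x2 -> I x.

Definition form := (R * R)%type.
Definition fplus (a b : form) : form := (fst a + fst b, snd a + snd b).
Definition fscal (c : R) (a : form) : form := (c * fst a, c * snd a).

Definition theta1 (mu : R -> R) (x z : R) : form := (1 / z, 0).
Definition theta2 (mu : R -> R) (x z : R) : form :=
  (- (mu x * z ^ 2 + 1) / z, 1 / z).
Definition K2 (mu : R -> R) (x z : R) : R := 1 - mu x * z ^ 2.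

Definition has_d (f : R -> R -> R) (x z : R) (w : form) : Prop :=
  differentiable_pt_lim f x z (fst w) (snd w).

Definition is_solution (U : R -> R -> Prop) (mu : R -> R)
    (a b p : R -> R -> R) : Prop :=
  forall x z, U x z ->
    let A := a x z in let B := b x z in let P := p x z in
    let t1 := theta1 mu x z in let t2 := theta2 mu x z in
    let K := K2 mu x z in
    has_d a x z (fscal (2 * A + P + 1) t1) /\
    has_d b x z (fplus (fscal (- 2 * B * (K - 1)) t1)
                       (fscal (2 * B - P + 1) t2)) /\
    has_d p x z (fplus (fscal (- (2 * B + (K - 2) * (P - 1))) t1)
                       (fscal (2 * A + P + 1) t2)).

Definition third_order_sol (I : R -> Prop) (mu f : R -> R) : Prop :=
  forall x, I x ->
    (forall k, (k <= 3)%nat -> ex_derive_n f k x) /\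
    Derive_n f 3 x + 4 * mu x * Derive f x + 2 * Derive mu x * f x = 0.

Definition second_order_sol (I : R -> Prop) (mu phi : R -> R) : Prop :=
  forall x, I x ->
    (forall k, (k <= 2)%nat -> ex_derive_n phi k x) /\
    Derive_n phi 2 x + mu x * phi x = 0.

Definition smooth_on (I : R -> Prop) (mu : R -> R) : Prop :=
  forall n x, I x -> ex_derive_n mu n x.

(* Main.v *)
Require Import Defs.
From Stdlib Require Import Reals Lra Lia Psatz Classical ClassicalEpsilon.
From Coquelicot Require Import Coquelicot.
Open Scope R_scope.

Lemma dpl_partials (f : R -> R -> R) x y lx ly :
  differentiable_pt_lim f x y lx ly ->
  is_derive (fun u => f u y) x lx /\ is_derive (fun v => f x v) y ly.
Proof.
  intros H; split; apply is_derive_Reals.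
  - pose proof (derivable_pt_lim_comp_2d f (fun t => t) (fun _ => y) x lx ly 1 0 H
      (derivable_pt_lim_id x) (derivable_pt_lim_const y x)) as H0.
    simpl in H0. replace (lx * 1 + ly * 0) with lx in H0 by ring. exact H0.
  - pose proof (derivable_pt_lim_comp_2d f (fun _ => x) (fun t => t) y lx ly 0 1 H
      (derivable_pt_lim_const x y) (derivable_pt_lim_id y)) as H0.
    simpl in H0. replace (lx * 0 + ly * 1) with ly in H0 by ring. exact H0.
Qed.

Lemma dpl_prod (g h : R -> R) x y g' h' :
  is_derive g x g' -> is_derive h y h' ->
  differentiable_pt_lim (fun u v => g u * h v) x y (g' * h y) (g x * h').
Proof.
  intros Hg Hh. apply filterdiff_differentiable_pt_lim.
  assert (H1 : filterdiff (fun u : R * R => g (fst u)) (locally (x, y))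
     (fun u : R * R => scal (fst u) g')).
  { apply (filterdiff_comp' (fun t : R * R => fst t) g (x,y) (fun t => fst t) (fun t => scal t g')).
    - apply filterdiff_linear, is_linear_fst.
    - exact Hg. }
  assert (H2 : filterdiff (fun u : R * R => h (snd u)) (locally (x, y))
     (fun u : R * R => scal (snd u) h')).
  { apply (filterdiff_comp' (fun t : R * R => snd t) h (x,y) (fun t => snd t) (fun t => scal t h')).
    - apply filterdiff_linear, is_linear_snd.
    - exact Hh. }
  pose proof (filterdiff_mult_fct _ _ _ _ _ (fun n m => Rmult_comm n m) H1 H2) as H3.
  eapply filterdiff_ext_lin. exact H3.
  intros [u v]; simpl. unfold scal, plus, mult; simpl. unfold mult; simpl. ring.
Qed.

Lemma dpl_plus (f g : R -> R -> R) x y fx fy gx gy :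
  differentiable_pt_lim f x y fx fy -> differentiable_pt_lim g x y gx gy ->
  differentiable_pt_lim (fun u v => f u v + g u v) x y (fx + gx) (fy + gy).
Proof.
  intros Hf Hg. apply filterdiff_differentiable_pt_lim.
  apply filterdiff_differentiable_pt_lim in Hf.
  apply filterdiff_differentiable_pt_lim in Hg.
  pose proof (filterdiff_plus_fct _ _ _ _ Hf Hg) as H3.
  eapply filterdiff_ext_lin. exact H3.
  intros [u v]; simpl. unfold plus; simpl. ring.
Qed.

Lemma loc_of_ball (x : R) (P : R -> Prop) :
  (exists e, 0 < e /\ forall t, Rabs (t - x) < e -> P t) -> locally x P.
Proof.
  intros [e [He H]]. exists (mkposreal e He). intros t Ht. apply H. exact Ht.
Qed.

Lemma ball_of_loc (x : R) (P : R -> Prop) :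
  locally x P -> exists e, 0 < e /\ forall t, Rabs (t - x) < e -> P t.
Proof.
  intros [e H]. exists e. split. apply cond_pos. intros t Ht. apply H. exact Ht.
Qed.

Lemma loc_interval l r x : l < x < r -> locally x (fun t => l < t < r).
Proof.
  intros Hx. apply loc_of_ball. exists (Rmin (x - l) (r - x)). split.
  apply Rmin_case; lra.
  intros t Ht. pose proof (Rmin_l (x-l) (r-x)). pose proof (Rmin_r (x-l) (r-x)).
  apply Rabs_def2 in Ht. lra.
Qed.

Lemma is_derive_cont (g : R -> R) t l : is_derive g t l -> continuity_pt g t.
Proof.
  intros H. apply continuity_pt_filterlim. pose proof (ex_derive_continuous (K:=R_AbsRing) (V:=R_NormedModule) g t (ex_intro _ l H)) as Hc. exact Hc.
Qed.

Lemma const_der (g : R -> R) a b :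
  (forall t, Rmin a b <= t <= Rmax a b -> is_derive g t 0) -> g a = g b.
Proof.
  intros H. destruct (MVT_gen g a b (fun _ => 0)) as [c [_ Hc]].
  - intros t Ht. apply H. lra.
  - intros t Ht. apply (is_derive_cont g t 0). apply H. exact Ht.
  - lra.
Qed.

Lemma chain3 (y y1 y2 y3 : R -> R) x :
  locally x (fun t => is_derive y t (y1 t) /\ is_derive y1 t (y2 t) /\ is_derive y2 t (y3 t)) ->
  (forall k, (k <= 3)%nat -> ex_derive_n y k x) /\ Derive y x = y1 x /\
  Derive_n y 2 x = y2 x /\ Derive_n y 3 x = y3 x.
Proof.
  intros H.
  assert (E1 : locally x (fun t => Derive_n y 1 t = y1 t)).
  { eapply filter_imp; [|exact H]. intros t [Ht _]. simpl. now apply is_derive_unique. }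
  assert (E2 : locally x (fun t => Derive_n y 2 t = y2 t)).
  { pose proof (locally_locally _ _ E1) as E1'.
    eapply filter_imp; [|exact (filter_and _ _ H E1')]. intros t [[_ [Ht _]] Hl].
    simpl. rewrite (Derive_ext_loc _ y1 t). now apply is_derive_unique. exact Hl. }
  assert (D1 : locally x (fun t => ex_derive (Derive_n y 1) t)).
  { pose proof (locally_locally _ _ E1) as E1'.
    eapply filter_imp; [|exact (filter_and _ _ H E1')]. intros t [[_ [Ht _]] Hl].
    apply (ex_derive_ext_loc y1). eapply filter_imp; [|exact Hl]. intros; now symmetry.
    now exists (y2 t). }
  assert (D2 : ex_derive (Derive_n y 2) x).
  { apply (ex_derive_ext_loc y2). eapply filter_imp; [|exact E2]. intros; now symmetry.
    destruct (locally_singleton _ _ H) as [_ [_ Ht]]. now exists (y3 x). }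
  destruct (locally_singleton _ _ H) as [H0 [_ H2]].
  split; [|split; [|split]].
  - intros k Hk. destruct k as [|[|[|[|k]]]]; simpl; try lia; auto.
    + now exists (y1 x).
    + now apply locally_singleton in D1.
  - now apply is_derive_unique.
  - now apply locally_singleton in E2.
  - simpl. rewrite (Derive_ext_loc _ y2 x). now apply is_derive_unique. exact E2.
Qed.

Lemma Rabs_def2b x a : Rabs x <= a -> - a <= x <= a.
Proof. intros H. pose proof (Rle_abs x). pose proof (Rle_abs (-x)). rewrite Rabs_Ropp in *. lra. Qed.

Lemma sq_bound (x y : R) : Rabs (2 * x * y) <= x ^ 2 + y ^ 2.
Proof.
  pose proof (pow2_ge_0 (x-y)); pose proof (pow2_ge_0 (x+y)). apply Rabs_le. split; nra.
Qed.

Lemma dE_bound u0 u1 u2 m m1 M1 M2 :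
  Rabs m <= M1 -> Rabs m1 <= M2 ->
  Rabs (2 * u0 * u1 + 2 * u1 * u2 + 2 * u2 * (-4 * m * u1 - 2 * m1 * u0))
  <= (2 + 4 * M1 + 2 * M2) * (u0 ^ 2 + u1 ^ 2 + u2 ^ 2).
Proof.
  intros H1 H2.
  pose proof (sq_bound u0 u1). pose proof (sq_bound u1 u2). pose proof (sq_bound u0 u2).
  assert (P0 : 0 <= M1) by (pose proof (Rabs_pos m); lra).
  assert (P1 : 0 <= M2) by (pose proof (Rabs_pos m1); lra).
  replace (2 * u0 * u1 + 2 * u1 * u2 + 2 * u2 * (-4 * m * u1 - 2 * m1 * u0))
    with (2 * u0 * u1 + 2 * u1 * u2 + ((-4 * m) * (2 * u1 * u2) + (-2 * m1) * (2 * u0 * u2))) by ring.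
  eapply Rle_trans. apply Rabs_triang.
  eapply Rle_trans. apply Rplus_le_compat_r. apply Rabs_triang.
  eapply Rle_trans. apply Rplus_le_compat_l. apply Rabs_triang.
  set (p1 := 2 * u0 * u1). set (p2 := 2 * u1 * u2). set (p3 := 2 * u0 * u2).
  rewrite (Rabs_mult (-4 * m)), (Rabs_mult (-2 * m1)), (Rabs_mult (-4)), (Rabs_mult (-2)).
  replace (Rabs (-4)) with 4 by (rewrite Rabs_left; lra).
  replace (Rabs (-2)) with 2 by (rewrite Rabs_left; lra).
  assert (Rabs (2 * u1 * u2) <= u0 ^ 2 + u1 ^ 2 + u2 ^ 2) by nra.
  assert (Rabs (2 * u0 * u2) <= u0 ^ 2 + u1 ^ 2 + u2 ^ 2) by nra.
  assert (Rabs (2 * u0 * u1) <= u0 ^ 2 + u1 ^ 2 + u2 ^ 2) by nra.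
  pose proof (Rabs_pos (2*u1*u2)). pose proof (Rabs_pos (2*u0*u2)).
  pose proof (Rabs_pos m). pose proof (Rabs_pos m1).
  assert (4 * Rabs m * Rabs (2 * u1 * u2) <= 4 * M1 * (u0 ^ 2 + u1 ^ 2 + u2 ^ 2)).
  { apply Rmult_le_compat; try lra. }
  assert (2 * Rabs m1 * Rabs (2 * u0 * u2) <= 2 * M2 * (u0 ^ 2 + u1 ^ 2 + u2 ^ 2)).
  { apply Rmult_le_compat; try lra. }
  unfold p1, p2, p3. lra.
Qed.

Lemma cont_bound (g : R -> R) a b :
  a <= b -> (forall s, a <= s <= b -> continuity_pt g s) ->
  exists M, forall s, a <= s <= b -> Rabs (g s) <= M.
Proof.
  intros Hab Hc.
  destruct (continuity_ab_maj (fun s => Rabs (g s)) a b Hab) as [Mx [HM _]].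
  - intros s Hs. apply (continuity_pt_comp g Rabs s). now apply Hc. apply Rcontinuity_abs.
  - exists (Rabs (g Mx)). exact HM.
Qed.

Ltac rwd H := match type of H with is_derive ?f ?x ?l =>
  replace (Derive (fun y => f y) x) with l by (symmetry; apply is_derive_unique; exact H) end.

Lemma zero3 (mu mu1 u0 u1 u2 : R -> R) l r c :
  (forall t, l < t < r -> continuity_pt mu t /\ continuity_pt mu1 t) ->
  (forall t, l < t < r -> is_derive u0 t (u1 t) /\ is_derive u1 t (u2 t) /\
       is_derive u2 t (-4 * mu t * u1 t - 2 * mu1 t * u0 t)) ->
  l < c < r -> u0 c = 0 -> u1 c = 0 -> u2 c = 0 ->
  forall t, l < t < r -> u0 t = 0 /\ u1 t = 0 /\ u2 t = 0.
Proof.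
  intros Hmu Hd Hc Z0 Z1 Z2 t Ht.
  set (a := Rmin c t). set (b := Rmax c t).
  assert (Hab : a <= b) by (unfold a, b, Rmin, Rmax; destruct (Rle_dec c t); lra).
  assert (Hin : forall s, a <= s <= b -> l < s < r).
  { intros s Hs. unfold a, b, Rmin, Rmax in Hs. destruct (Rle_dec c t); lra. }
  destruct (cont_bound mu a b Hab) as [M1 HM1]. { intros s Hs. apply Hmu, Hin, Hs. }
  destruct (cont_bound mu1 a b Hab) as [M2 HM2]. { intros s Hs. apply Hmu, Hin, Hs. }
  set (C := 2 + 4 * M1 + 2 * M2).
  set (E := fun s => u0 s ^ 2 + u1 s ^ 2 + u2 s ^ 2).
  set (dE := fun s => 2 * u0 s * u1 s + 2 * u1 s * u2 s + 2 * u2 s * (-4 * mu s * u1 s - 2 * mu1 s * u0 s)).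
  assert (HdE : forall s, a <= s <= b -> Rabs (dE s) <= C * E s).
  { intros s Hs. apply dE_bound; auto. }
  assert (DE : forall s k, l < s < r -> is_derive (fun s => E s * exp (k * s)) s ((dE s + k * E s) * exp (k * s))).
  { intros s k Hs. destruct (Hd s Hs) as [D0 [D1 D2]]. unfold E, dE. auto_derive.
    repeat split; eexists; eassumption.
    rwd D0. rwd D1. rwd D2.
    ring. }
  assert (E0 : E c = 0) by (unfold E; rewrite Z0, Z1, Z2; ring).
  assert (Epos : forall s, 0 <= E s) by (intros s; unfold E; nra).
  assert (Et : E t <= 0).
  { destruct (Rle_dec c t) as [Hct|Hct].
    - destruct (MVT_gen (fun s => E s * exp (- C * s)) c t (fun s => (dE s + - C * E s) * exp (- C * s))) as [xi [Hxi Heq]].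
      + intros s Hs. apply DE. apply Hin. unfold a, b. unfold Rmin, Rmax in *. destruct (Rle_dec c t); destruct (Rle_dec t c); lra.
      + intros s Hs. eapply is_derive_cont. apply DE. apply Hin. unfold a, b. unfold Rmin, Rmax in *. destruct (Rle_dec c t); destruct (Rle_dec t c); lra.
      + assert (Hx : a <= xi <= b). { unfold a, b. unfold Rmin, Rmax in *. destruct (Rle_dec c t); destruct (Rle_dec t c); lra. }
        pose proof (HdE xi Hx) as Hb. apply Rabs_def2b in Hb.
        pose proof (exp_pos (- C * xi)). pose proof (exp_pos (- C * t)).
        rewrite E0 in Heq. simpl in Heq.
        assert ((dE xi + - C * E xi) * exp (- C * xi) * (t - c) <= 0).
        { apply Rmult_le_0_r; [|lra]. apply Rmult_le_0_r; lra. }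
        assert (E t * exp (- C * t) <= 0) by lra. nra.
    - destruct (MVT_gen (fun s => E s * exp (C * s)) t c (fun s => (dE s + C * E s) * exp (C * s))) as [xi [Hxi Heq]].
      + intros s Hs. apply DE. apply Hin. unfold a, b. unfold Rmin, Rmax in *. destruct (Rle_dec c t); destruct (Rle_dec t c); lra.
      + intros s Hs. eapply is_derive_cont. apply DE. apply Hin. unfold a, b. unfold Rmin, Rmax in *. destruct (Rle_dec c t); destruct (Rle_dec t c); lra.
      + assert (Hx : a <= xi <= b). { unfold a, b. unfold Rmin, Rmax in *. destruct (Rle_dec c t); destruct (Rle_dec t c); lra. }
        pose proof (HdE xi Hx) as Hb. apply Rabs_def2b in Hb.
        pose proof (exp_pos (C * xi)). pose proof (exp_pos (C * t)).
        rewrite E0 in Heq. simpl in Heq.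
        assert (0 <= (dE xi + C * E xi) * exp (C * xi) * (c - t)).
        { apply Rmult_le_pos; [|lra]. apply Rmult_le_pos; lra. }
        assert (E t * exp (C * t) <= 0) by lra. nra. }
  unfold E in Et. split; [|split]; nra.
Qed.

Definition sol3 (I : R -> Prop) (mu : R -> R) (l r : R) (Y : R -> R) : Prop :=
  (forall t, l < t < r -> I t) /\
  forall t, l < t < r -> (forall k, (k <= 3)%nat -> ex_derive_n Y k t) /\
     Derive_n Y 3 t + 4 * mu t * Derive Y t + 2 * Derive mu t * Y t = 0.

Definition deq (G Y : R -> R) (t : R) : Prop :=
  G t = Y t /\ Derive G t = Derive Y t /\ Derive_n G 2 t = Derive_n Y 2 t.

Lemma is_derive_eq (f : R -> R) x l l' : is_derive f x l -> l = l' -> is_derive f x l'.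
Proof. intros H ->. exact H. Qed.

Lemma sol3_chain I mu l r Y t : sol3 I mu l r Y -> l < t < r ->
  is_derive Y t (Derive Y t) /\ is_derive (Derive Y) t (Derive_n Y 2 t) /\
  is_derive (Derive_n Y 2) t (-4 * mu t * Derive Y t - 2 * Derive mu t * Y t).
Proof.
  intros [_ H] Ht. destruct (H t Ht) as [Hk Ho].
  pose proof (Hk 1%nat ltac:(lia)) as H1. pose proof (Hk 2%nat ltac:(lia)) as H2.
  pose proof (Hk 3%nat ltac:(lia)) as H3. simpl in H1, H2, H3.
  split; [|split].
  - apply Derive_correct. exact H1.
  - apply Derive_correct in H2. exact H2.
  - apply Derive_correct in H3. eapply is_derive_eq. exact H3. simpl in Ho. simpl. lra.
Qed.

Lemma smooth_cont I mu t : smooth_on I mu -> I t ->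
  continuity_pt mu t /\ continuity_pt (Derive mu) t /\ ex_derive mu t.
Proof.
  intros H Ht. pose proof (H 1%nat t Ht) as H1. pose proof (H 2%nat t Ht) as H2.
  simpl in H1, H2. destruct H1 as [l1 H1]. destruct H2 as [l2 H2].
  split; [|split].
  - eapply is_derive_cont. exact H1.
  - eapply is_derive_cont. exact H2.
  - exists l1. exact H1.
Qed.

Lemma sol3_sub I mu l r l' r' Y : sol3 I mu l r Y -> l <= l' -> r' <= r -> sol3 I mu l' r' Y.
Proof.
  intros [H1 H2] ? ?. split; intros t Ht; [apply H1|apply H2]; lra.
Qed.

Lemma uniq3 I mu l r Y1 Y2 c : smooth_on I mu -> sol3 I mu l r Y1 -> sol3 I mu l r Y2 ->
  l < c < r -> deq Y1 Y2 c -> forall t, l < t < r -> deq Y1 Y2 t.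
Proof.
  intros Hmu S1 S2 Hc [E0 [E1 E2]] t Ht.
  destruct (zero3 mu (Derive mu) (fun s => Y1 s - Y2 s) (fun s => Derive Y1 s - Derive Y2 s)
     (fun s => Derive_n Y1 2 s - Derive_n Y2 2 s) l r c) with (t := t) as [Z0 [Z1 Z2]]; auto.
  - intros s Hs. destruct (smooth_cont I mu s Hmu) as [? [? ?]]. apply (proj1 S1). exact Hs. auto.
  - intros s Hs. destruct (sol3_chain I mu l r Y1 s S1 Hs) as [A0 [A1 A2]].
    destruct (sol3_chain I mu l r Y2 s S2 Hs) as [B0 [B1 B2]].
    split; [|split].
    + apply (is_derive_minus Y1 Y2); auto.
    + apply (is_derive_minus (Derive Y1) (Derive Y2)); auto.
    + eapply is_derive_eq. apply (is_derive_minus (Derive_n Y1 2) (Derive_n Y2 2)); eauto.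
      unfold minus, plus, opp; simpl. ring.
  - lra.
  - lra.
  - lra.
  - unfold deq. lra.
Qed.

Lemma loc_data (G Y : R -> R) t : locally t (fun s => G s = Y s) ->
  G t = Y t /\ Derive G t = Derive Y t /\ Derive_n G 2 t = Derive_n Y 2 t /\
  Derive_n G 3 t = Derive_n Y 3 t /\ (forall k, ex_derive_n Y k t -> ex_derive_n G k t).
Proof.
  intros H. assert (H' : locally t (fun s => Y s = G s)).
  { eapply filter_imp; [|exact H]. intros; now symmetry. }
  split; [|split; [|split; [|split]]].
  - exact (locally_singleton _ _ H).
  - apply (Derive_n_ext_loc G Y 1 t H).
  - apply (Derive_n_ext_loc G Y 2 t H).
  - apply (Derive_n_ext_loc G Y 3 t H).
  - intros k Hk. apply (ex_derive_n_ext_loc Y G k t H' Hk).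
Qed.

Lemma glue I mu l1 r1 l2 r2 Y1 Y2 c : smooth_on I mu ->
  sol3 I mu l1 r1 Y1 -> sol3 I mu l2 r2 Y2 -> l1 < c < r1 -> l2 < c < r2 -> deq Y1 Y2 c ->
  exists G, sol3 I mu (Rmin l1 l2) (Rmax r1 r2) G /\
    (forall t, l1 < t < r1 -> deq G Y1 t) /\ (forall t, l2 < t < r2 -> deq G Y2 t).
Proof.
  intros Hmu S1 S2 Hc1 Hc2 Hd.
  set (G := fun x => if Rlt_dec l1 x then if Rlt_dec x r1 then Y1 x else Y2 x else Y2 x).
  assert (G1 : forall t, l1 < t < r1 -> G t = Y1 t).
  { intros t Ht. unfold G. destruct (Rlt_dec l1 t); [|lra]. destruct (Rlt_dec t r1); lra. }
  assert (G2 : forall t, l2 < t < r2 -> G t = Y2 t).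
  { intros t Ht. destruct (Rlt_dec l1 t) as [a1|a1]; [destruct (Rlt_dec t r1) as [a2|a2]|].
    - rewrite G1 by lra.
      assert (HU := uniq3 I mu (Rmax l1 l2) (Rmin r1 r2) Y1 Y2 c Hmu).
      destruct HU with (t := t) as [HH _].
      + apply (sol3_sub _ _ l1 r1); [exact S1|apply Rmax_l|apply Rmin_l].
      + apply (sol3_sub _ _ l2 r2); [exact S2|apply Rmax_r|apply Rmin_r].
      + unfold Rmax, Rmin; destruct (Rle_dec l1 l2); destruct (Rle_dec r1 r2); lra.
      + exact Hd.
      + unfold Rmax, Rmin; destruct (Rle_dec l1 l2); destruct (Rle_dec r1 r2); lra.
      + exact HH.
    - unfold G. destruct (Rlt_dec l1 t); [|lra]. destruct (Rlt_dec t r1); [lra|reflexivity].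
    - unfold G. destruct (Rlt_dec l1 t); [lra|reflexivity]. }
  assert (L1 : forall t, l1 < t < r1 -> locally t (fun s => G s = Y1 s)).
  { intros t Ht. eapply filter_imp; [|apply (loc_interval l1 r1 t Ht)]. exact G1. }
  assert (L2 : forall t, l2 < t < r2 -> locally t (fun s => G s = Y2 s)).
  { intros t Ht. eapply filter_imp; [|apply (loc_interval l2 r2 t Ht)]. exact G2. }
  exists G. split; [split|split].
  - intros t Ht.
    assert (l1 < t < r1 \/ l2 < t < r2) as [Ht'|Ht'] by
      (unfold Rmax, Rmin in Ht; destruct (Rle_dec l1 l2); destruct (Rle_dec r1 r2); lra).
    + apply (proj1 S1); exact Ht'.
    + apply (proj1 S2); exact Ht'.
  - intros t Ht.
    assert (l1 < t < r1 \/ l2 < t < r2) as [Ht'|Ht'] by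
      (unfold Rmax, Rmin in Ht; destruct (Rle_dec l1 l2); destruct (Rle_dec r1 r2); lra).
    + destruct (loc_data G Y1 t (L1 t Ht')) as [D0 [D1 [D2 [D3 Dk]]]].
      destruct ((proj2 S1) t Ht') as [Hk Ho]. split.
      * intros k Hk'. apply Dk, Hk, Hk'.
      * rewrite D0, D1, D3. exact Ho.
    + destruct (loc_data G Y2 t (L2 t Ht')) as [D0 [D1 [D2 [D3 Dk]]]].
      destruct ((proj2 S2) t Ht') as [Hk Ho]. split.
      * intros k Hk'. apply Dk, Hk, Hk'.
      * rewrite D0, D1, D3. exact Ho.
  - intros t Ht. destruct (loc_data G Y1 t (L1 t Ht)) as [D0 [D1 [D2 _]]]. split; auto.
  - intros t Ht. destruct (loc_data G Y2 t (L2 t Ht)) as [D0 [D1 [D2 _]]]. split; auto.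
Qed.

Definition F0 (a : R -> R -> R) x z := a x z + 1.
Definition F1 (a p : R -> R -> R) x z := (2 * a x z + p x z + 1) / z.
Definition F2 (mu : R -> R) (a b p : R -> R -> R) x z :=
  2 * (a x z + p x z - b x z - mu x * z ^ 2 * (a x z + 1)) / z ^ 2.

Lemma step1 U mu a b p x z : is_solution U mu a b p -> U x z -> 0 < z -> ex_derive mu x ->
  is_derive (fun u => F0 a u z) x (F1 a p x z) /\
  is_derive (fun u => F1 a p u z) x (F2 mu a b p x z) /\
  is_derive (fun u => F2 mu a b p u z) x (-4 * mu x * F1 a p x z - 2 * Derive mu x * F0 a x z) /\
  is_derive (fun v => F0 a x v) z 0 /\
  is_derive (fun v => F1 a p x v) z 0 /\
  is_derive (fun v => F2 mu a b p x v) z 0.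
Proof.
  intros Hs Hu Hz Hmu. destruct (Hs x z Hu) as [Ha [Hb Hp]].
  unfold has_d, fscal, fplus, theta1, theta2, K2 in Ha, Hb, Hp. simpl in Ha, Hb, Hp.
  apply dpl_partials in Ha. apply dpl_partials in Hb. apply dpl_partials in Hp.
  destruct Ha as [Hax Haz]. destruct Hb as [Hbx Hbz]. destruct Hp as [Hpx Hpz].
  assert (Eax : Derive (fun u : R => a u z) x = _) by (apply is_derive_unique; exact Hax). assert (Eaz : Derive (fun v : R => a x v) z = _) by (apply is_derive_unique; exact Haz).
  assert (Ebx : Derive (fun u : R => b u z) x = _) by (apply is_derive_unique; exact Hbx). assert (Ebz : Derive (fun v : R => b x v) z = _) by (apply is_derive_unique; exact Hbz).
  assert (Epx : Derive (fun u : R => p u z) x = _) by (apply is_derive_unique; exact Hpx). assert (Epz : Derive (fun v : R => p x v) z = _) by (apply is_derive_unique; exact Hpz).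
  assert (Xa : ex_derive (fun u => a u z) x) by (eexists; exact Hax).
  assert (Xb : ex_derive (fun u => b u z) x) by (eexists; exact Hbx).
  assert (Xp : ex_derive (fun u => p u z) x) by (eexists; exact Hpx).
  assert (Za : ex_derive (fun v => a x v) z) by (eexists; exact Haz).
  assert (Zb : ex_derive (fun v => b x v) z) by (eexists; exact Hbz).
  assert (Zp : ex_derive (fun v => p x v) z) by (eexists; exact Hpz).
  assert (Hz' : z <> 0) by lra.
  unfold F0, F1, F2.
  split; [|split; [|split; [|split; [|split]]]].
  - auto_derive; auto. rewrite Eax. field. auto.
  - auto_derive; auto. repeat split; auto. rewrite Eax, Epx. field. auto.
  - auto_derive; auto. repeat split; auto. change (Derive (fun x0 : R => mu x0) x) with (Derive mu x). rewrite Eax, Epx, Ebx. field. auto.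
  - auto_derive; auto. rewrite Eaz. ring.
  - auto_derive; auto. repeat split; auto. rewrite Eaz, Epz. field. auto.
  - auto_derive; auto. repeat split; auto. rewrite Eaz, Epz, Ebz. field. auto.
Qed.

Definition dat mu (a b p : R -> R -> R) (Y : R -> R) t u v : Prop :=
  Y t = F0 a u v /\ Derive Y t = F1 a p u v /\ Derive_n Y 2 t = F2 mu a b p u v.

Lemma abs_int t x e : Rabs (t - x) < e <-> x - e < t < x + e.
Proof.
  split; intros H.
  - apply Rabs_def2 in H. lra.
  - apply Rabs_def1; lra.
Qed.

Lemma sheet U mu a b p x z :
  open2 U -> (forall x z, U x z -> 0 < z) -> smooth_on (projx U) mu ->
  is_solution U mu a b p -> U x z ->
  exists eps, 0 < eps /\ (forall u v, Rabs (u - x) < eps -> Rabs (v - z) < eps -> U u v) /\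
   sol3 (projx U) mu (x - eps) (x + eps) (fun u => F0 a u z) /\
   forall u v, Rabs (u - x) < eps -> Rabs (v - z) < eps -> dat mu a b p (fun u => F0 a u z) u u v.
Proof.
  intros Ho Hz Hmu Hs Hu.
  destruct (Ho x z Hu) as [eps [He Hbox]].
  assert (Hline : forall u, x - eps < u < x + eps -> U u z).
  { intros u Hu'. apply Hbox. apply abs_int. exact Hu'. rewrite Rminus_diag, Rabs_R0. exact He. }
  assert (Hst : forall u v, Rabs (u - x) < eps -> Rabs (v - z) < eps ->
     is_derive (fun u => F0 a u v) u (F1 a p u v) /\
     is_derive (fun u => F1 a p u v) u (F2 mu a b p u v) /\
     is_derive (fun u => F2 mu a b p u v) u (-4 * mu u * F1 a p u v - 2 * Derive mu u * F0 a u v) /\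
     is_derive (fun v => F0 a u v) v 0 /\
     is_derive (fun v => F1 a p u v) v 0 /\
     is_derive (fun v => F2 mu a b p u v) v 0).
  { intros u v H1 H2. assert (U u v) by (apply Hbox; auto).
    assert (projx U u) by (exists v; auto).
    destruct (smooth_cont (projx U) mu u Hmu) as [_ [_ ?]]; auto.
    apply (step1 U); eauto. }
  assert (Hch : forall u, x - eps < u < x + eps ->
     (forall k, (k <= 3)%nat -> ex_derive_n (fun u => F0 a u z) k u) /\
     Derive (fun u => F0 a u z) u = F1 a p u z /\
     Derive_n (fun u => F0 a u z) 2 u = F2 mu a b p u z /\
     Derive_n (fun u => F0 a u z) 3 u = -4 * mu u * F1 a p u z - 2 * Derive mu u * F0 a u z).
  { intros u Hu'.
    apply (chain3 (fun u => F0 a u z) (fun u => F1 a p u z) (fun u => F2 mu a b p u z)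
       (fun u => -4 * mu u * F1 a p u z - 2 * Derive mu u * F0 a u z)).
    eapply filter_imp; [|apply (loc_interval _ _ u Hu')].
    intros t Ht. destruct (Hst t z) as [A [B [C _]]]. apply abs_int; exact Ht.
    rewrite Rminus_diag, Rabs_R0. exact He. auto. }
  exists eps. split; [exact He|split; [exact Hbox|split]].
  - split.
    + intros t Ht. exists z. apply Hline. exact Ht.
    + intros t Ht. destruct (Hch t Ht) as [K [D1 [D2 D3]]]. split. exact K.
      rewrite D1, D3. ring.
  - intros u v H1 H2. apply abs_int in H1 as H1'. destruct (Hch u H1') as [_ [D1 [D2 _]]].
    assert (Hcz : forall (g : R -> R), (forall s, Rabs (s - z) < eps -> is_derive g s 0) -> g v = g z).
    { intros g Hg. apply const_der. intros s Hs0. apply Hg.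
      apply abs_int in H2. apply abs_int. unfold Rmin, Rmax in Hs0. destruct (Rle_dec v z); lra. }
    unfold dat. rewrite D1, D2. split; [|split].
    + symmetry. apply (Hcz (fun s => F0 a u s)). intros s Hs0. apply (Hst u s H1 Hs0).
    + symmetry. apply (Hcz (fun s => F1 a p u s)). intros s Hs0. apply (Hst u s H1 Hs0).
    + symmetry. apply (Hcz (fun s => F2 mu a b p u s)). intros s Hs0. apply (Hst u s H1 Hs0).
Qed.

Lemma dat_deq mu a b p Y1 Y2 t u v : dat mu a b p Y1 t u v -> dat mu a b p Y2 t u v -> deq Y1 Y2 t.
Proof. intros [A [B C]] [D [E F]]. unfold deq. rewrite A, B, C, D, E, F. auto. Qed.

Lemma deq_dat mu a b p G Y t u v : deq G Y t -> dat mu a b p Y t u v -> dat mu a b p G t u v.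
Proof. intros [A [B C]] [D [E F]]. unfold dat. rewrite A, B, C. auto. Qed.

Lemma mm l1 l2 r1 r2 t : l1 < t < r1 -> Rmin l1 l2 < t < Rmax r1 r2.
Proof. intros H. pose proof (Rmin_l l1 l2). pose proof (Rmax_l r1 r2). lra. Qed.
Lemma mm' l1 l2 r1 r2 t : l2 < t < r2 -> Rmin l1 l2 < t < Rmax r1 r2.
Proof. intros H. pose proof (Rmin_r l1 l2). pose proof (Rmax_r r1 r2). lra. Qed.

Lemma center x z e : 0 < e -> Rabs (x - x) < e /\ Rabs (z - z) < e.
Proof. intros H. rewrite !Rminus_diag, Rabs_R0. auto. Qed.

Lemma forward U mu a b p : domain2 U -> (forall x z, U x z -> 0 < z) ->
  smooth_on (projx U) mu -> is_solution U mu a b p ->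
  exists f : R -> R,
       third_order_sol (projx U) mu f /\
       forall x z, U x z ->
         a x z = -1 + f x /\
         b x z = - (1 + mu x * z ^ 2) * f x + z * Derive f x
                 - / 2 * z ^ 2 * Derive_n f 2 x /\
         p x z = 1 - 2 * f x + z * Derive f x.
Proof.
  intros [Ho Hc] Hz Hmu Hs.
  destruct (classic (exists x0 z0, U x0 z0)) as [[x0 [z0 H0]] | Hne].
  2:{ exists (fun _ => 0). split.
      - intros x [z Hu]. exfalso. eauto.
      - intros x z Hu. exfalso. eauto. }
  set (I := projx U).
  set (Reach := fun x z => exists Y l r, sol3 I mu l r Y /\ l < x0 < r /\ l < x < r /\
     dat mu a b p Y x0 x0 z0 /\ dat mu a b p Y x x z).
  assert (R0 : Reach x0 z0).
  { destruct (sheet U mu a b p x0 z0 Ho Hz Hmu Hs H0) as [e [He [Hb [S D]]]].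
    destruct (center x0 z0 e He) as [C1 C2].
    exists (fun u => F0 a u z0), (x0 - e), (x0 + e). split; [exact S|]. split; [lra|]. split; [lra|]. split; apply D; auto. }
  assert (Hall : forall x z, U x z -> Reach x z).
  { destruct (Hc (fun x z => U x z /\ Reach x z) (fun x z => U x z /\ ~ Reach x z)) as [HV|HW].
    - intros x z [Hu HR].
      destruct (sheet U mu a b p x z Ho Hz Hmu Hs Hu) as [e [He [Hb [S D]]]].
      destruct (center x z e He) as [C1 C2].
      destruct HR as [Y [l [r [SY [Hx0 [Hx [D0 Dx]]]]]]].
      destruct (glue I mu l r (x - e) (x + e) Y (fun u => F0 a u z) x Hmu SY S Hx ltac:(lra))
        as [G [SG [G1 G2]]].
      { apply (dat_deq mu a b p _ _ x x z). exact Dx. apply D; auto. }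
      exists e. split; [exact He|]. intros u v H1 H2. split; [apply Hb; auto|].
      exists G, (Rmin l (x - e)), (Rmax r (x + e)). split; [exact SG|]. split; [apply mm; exact Hx0|].
      apply abs_int in H1 as H1'. split; [apply mm'; exact H1'|]. split.
      + apply (deq_dat mu a b p G Y). apply G1; auto. exact D0.
      + apply (deq_dat mu a b p G (fun u => F0 a u z)). apply G2; auto. apply D; auto.
    - intros x z [Hu HnR].
      destruct (sheet U mu a b p x z Ho Hz Hmu Hs Hu) as [e [He [Hb [S D]]]].
      destruct (center x z e He) as [C1 C2].
      exists e. split; [exact He|]. intros u v H1 H2. split; [apply Hb; auto|].
      intros [Y [l [r [SY [Hx0 [Hx [D0 Du]]]]]]]. apply HnR.
      apply abs_int in H1 as H1'.
      destruct (glue I mu l r (x - e) (x + e) Y (fun u => F0 a u z) u Hmu SY S Hx H1')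
        as [G [SG [G1 G2]]].
      { apply (dat_deq mu a b p _ _ u u v). exact Du. apply D; auto. }
      exists G, (Rmin l (x - e)), (Rmax r (x + e)). split; [exact SG|]. split; [apply mm; exact Hx0|].
      split; [apply mm'; lra|]. split.
      + apply (deq_dat mu a b p G Y). apply G1; auto. exact D0.
      + apply (deq_dat mu a b p G (fun u => F0 a u z)). apply G2; lra. apply D; auto.
    - intros x z Hu. destruct (classic (Reach x z)); [left|right]; auto.
    - intros x z _ [_ A] [_ B]. auto.
    - intros x z Hu. apply HV. exact Hu.
    - exfalso. destruct (HW x0 z0 H0) as [_ HH]. auto. }
  assert (Hslice : forall x z1 z2, U x z1 -> U x z2 ->
     F0 a x z1 = F0 a x z2 /\ F1 a p x z1 = F1 a p x z2 /\ F2 mu a b p x z1 = F2 mu a b p x z2).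
  { intros x z1 z2 H1 H2.
    destruct (Hall x z1 H1) as [Y1 [l1 [r1 [S1 [A1 [B1 [C1 D1]]]]]]].
    destruct (Hall x z2 H2) as [Y2 [l2 [r2 [S2 [A2 [B2 [C2 D2]]]]]]].
    destruct (uniq3 I mu (Rmax l1 l2) (Rmin r1 r2) Y1 Y2 x0 Hmu) with (t := x) as [E0 [E1 E2]].
    - apply (sol3_sub _ _ l1 r1); [exact S1|apply Rmax_l|apply Rmin_l].
    - apply (sol3_sub _ _ l2 r2); [exact S2|apply Rmax_r|apply Rmin_r].
    - unfold Rmax, Rmin; destruct (Rle_dec l1 l2); destruct (Rle_dec r1 r2); lra.
    - apply (dat_deq mu a b p _ _ x0 x0 z0); auto.
    - unfold Rmax, Rmin; destruct (Rle_dec l1 l2); destruct (Rle_dec r1 r2); lra.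
    - destruct D1 as [P1 [Q1 T1]]. destruct D2 as [P2 [Q2 T2]].
      rewrite <- P1, <- Q1, <- T1, <- P2, <- Q2, <- T2. auto. }
  set (zsel := fun x => epsilon (inhabits 0) (fun z => U x z)).
  assert (Hzsel : forall x z, U x z -> U x (zsel x)).
  { intros x z Hu. unfold zsel. apply epsilon_spec. exists z; exact Hu. }
  set (f := fun x => F0 a x (zsel x)).
  assert (Hloc : forall x z, U x z ->
     f x = F0 a x z /\ Derive f x = F1 a p x z /\ Derive_n f 2 x = F2 mu a b p x z /\
     (forall k, (k <= 3)%nat -> ex_derive_n f k x) /\
     Derive_n f 3 x + 4 * mu x * Derive f x + 2 * Derive mu x * f x = 0).
  { intros x z Hu.
    destruct (sheet U mu a b p x z Ho Hz Hmu Hs Hu) as [e [He [Hb [S D]]]].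
    destruct (center x z e He) as [C1 C2].
    assert (L : locally x (fun u => f u = F0 a u z)).
    { apply loc_of_ball. exists e. split; [exact He|]. intros t Ht.
      assert (U t z) by (apply Hb; auto). unfold f. apply (Hslice t); eauto. }
    destruct (loc_data f (fun u => F0 a u z) x L) as [Q0 [Q1 [Q2 [Q3 Qk]]]].
    destruct (D x z C1 C2) as [P0 [P1 P2]].
    assert (Hx : x - e < x < x + e) by lra.
    destruct ((proj2 S) x Hx) as [K O].
    split; [|split; [|split; [|split]]].
    - rewrite Q0. reflexivity.
    - rewrite Q1. exact P1.
    - rewrite Q2. exact P2.
    - intros k Hk. apply Qk, K, Hk.
    - rewrite Q3, Q1, Q0. exact O. }
  exists f. split.
  - intros x [z Hu]. destruct (Hloc x z Hu) as [_ [_ [_ [K O]]]]. split; auto.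
  - intros x z Hu. destruct (Hloc x z Hu) as [Q0 [Q1 [Q2 _]]].
    rewrite Q0, Q1, Q2. pose proof (Hz x z Hu). unfold F0, F1, F2.
    split; [ring|split]; field; lra.
Qed.

Lemma dpl_eq (g : R -> R -> R) x y lx ly lx' ly' :
  differentiable_pt_lim g x y lx ly -> lx = lx' -> ly = ly' -> differentiable_pt_lim g x y lx' ly'.
Proof. intros H -> ->. exact H. Qed.

Lemma backward U mu f a b p : open2 U -> (forall x z, U x z -> 0 < z) ->
  smooth_on (projx U) mu -> third_order_sol (projx U) mu f ->
  (forall x z, U x z ->
         a x z = -1 + f x /\
         b x z = - (1 + mu x * z ^ 2) * f x + z * Derive f x
                 - / 2 * z ^ 2 * Derive_n f 2 x /\
         p x z = 1 - 2 * f x + z * Derive f x) ->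
  is_solution U mu a b p.
Proof.
  intros Ho Hz Hmu Hf Hab x z Hu.
  assert (Ix : projx U x) by (exists z; exact Hu).
  destruct (Hf x Ix) as [Hk Ho3].
  destruct (smooth_cont (projx U) mu x Hmu Ix) as [_ [_ Xmu]].
  pose proof (Hk 1%nat ltac:(lia)) as J1. pose proof (Hk 2%nat ltac:(lia)) as J2.
  pose proof (Hk 3%nat ltac:(lia)) as J3. simpl in J1, J2, J3.
  apply Derive_correct in J1. apply Derive_correct in J2. apply Derive_correct in J3.
  apply Derive_correct in Xmu.
  change (is_derive f x (Derive f x)) in J1. change (is_derive (Derive f) x (Derive_n f 2 x)) in J2.
  change (is_derive (Derive_n f 2) x (Derive_n f 3 x)) in J3.
  destruct (Ho x z Hu) as [eps [He Hbox]].
  assert (Loc : forall (G g : R -> R -> R), (forall u v, U u v -> G u v = g u v) ->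
            locally_2d (fun u v => G u v = g u v) x z).
  { intros G g HG. exists (mkposreal eps He). intros u v H1 H2. apply HG, Hbox; auto. }
  destruct (Hab x z Hu) as [EA [EB EP]].
  pose proof (Hz x z Hu) as Hz0.
  assert (Dc : is_derive (fun _ : R => 1) z 0) by (auto_derive; auto; ring).
  assert (Dv : is_derive (fun v : R => v) z 1) by (auto_derive; auto; ring).
  assert (Dv2 : is_derive (fun v : R => v ^ 2) z (2 * z)) by (auto_derive; auto; ring).
  cbv zeta. unfold has_d, fscal, fplus, theta1, theta2, K2. simpl.
  rewrite EA, EB, EP.
  split; [|split].
  - apply (differentiable_pt_lim_ext (fun u v => (-1 + f u) * 1)).
    { apply Loc. intros u v H. destruct (Hab u v H) as [E _]. rewrite E. ring. }
    eapply dpl_eq.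
    + apply (dpl_prod (fun u => -1 + f u) (fun _ => 1)).
      * apply (is_derive_plus (fun _ => -1) f). apply is_derive_const. exact J1.
      * exact Dc.
    + unfold plus, zero; simpl. field. lra.
    + ring.
  - apply (differentiable_pt_lim_ext
       (fun u v => (- f u) * 1 + (- (mu u * f u) - / 2 * Derive_n f 2 u) * v ^ 2 + Derive f u * v)).
    { apply Loc. intros u v H. destruct (Hab u v H) as [_ [E _]]. rewrite E. ring. }
    eapply dpl_eq.
    + apply dpl_plus; [apply dpl_plus|].
      * apply (dpl_prod (fun u => - f u) (fun _ => 1)); [apply (is_derive_opp f); exact J1|exact Dc].
      * apply (dpl_prod (fun u => - (mu u * f u) - / 2 * Derive_n f 2 u) (fun v => v ^ 2)); [|exact Dv2].
        apply (is_derive_minus (fun u => - (mu u * f u)) (fun u => / 2 * Derive_n f 2 u)).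
        apply (is_derive_opp (fun u => mu u * f u)). apply (is_derive_mult mu f); [exact Xmu|exact J1|intros; apply Rmult_comm].
        apply (is_derive_scal (Derive_n f 2)). exact J3.
      * apply (dpl_prod (Derive f) (fun v => v)); [exact J2|exact Dv].
    + unfold plus, minus, opp, mult, scal; simpl. unfold mult, plus, opp; simpl.
      change (Derive (fun x0 : R => Derive (fun x1 : R => Derive (fun x2 : R => f x2) x1) x0) x) with (Derive_n f 3 x).
      change (Derive (fun x0 : R => Derive (fun x1 : R => f x1) x0) x) with (Derive_n f 2 x).
      replace (Derive_n f 3 x) with (- 4 * mu x * Derive f x - 2 * Derive mu x * f x) by lra.
      field. lra.
    + field. lra.
  - apply (differentiable_pt_lim_ext (fun u v => (1 - 2 * f u) * 1 + Derive f u * v)).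
    { apply Loc. intros u v H. destruct (Hab u v H) as [_ [_ E]]. rewrite E. ring. }
    eapply dpl_eq.
    + apply dpl_plus.
      * apply (dpl_prod (fun u => 1 - 2 * f u) (fun _ => 1)); [|exact Dc].
        apply (is_derive_minus (fun _ => 1) (fun u => 2 * f u)). apply is_derive_const.
        apply (is_derive_scal f). exact J1.
      * apply (dpl_prod (Derive f) (fun v => v)); [exact J2|exact Dv].
    + unfold plus, minus, opp, mult, scal, zero; simpl. unfold mult, plus, opp; simpl.
      field. lra.
    + field. lra.
Qed.

Lemma projx_open U : open2 U -> forall x, projx U x -> locally x (projx U).
Proof.
  intros Ho x [z Hu]. destruct (Ho x z Hu) as [e [He H]]. apply loc_of_ball. exists e.
  split; [exact He|]. intros t Ht. exists z. apply H; auto. rewrite Rminus_diag, Rabs_R0; exact He.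
Qed.

Lemma const_int (I : R -> Prop) (g : R -> R) x1 x2 : is_interval I ->
  (forall t, I t -> is_derive g t 0) -> I x1 -> I x2 -> g x1 = g x2.
Proof.
  intros HI Hg H1 H2. apply const_der. intros t Ht. apply Hg.
  unfold Rmin, Rmax in Ht. destruct (Rle_dec x1 x2).
  - apply (HI x1 x2); auto; lra.
  - apply (HI x2 x1); auto; lra.
Qed.

Lemma phi_der I mu phi t : second_order_sol I mu phi -> I t ->
  Derive (fun x : R => phi x) t = Derive phi t /\
  Derive (fun x : R => Derive phi x) t = - mu t * phi t /\
  ex_derive (fun x : R => phi x) t /\ ex_derive (fun x : R => Derive phi x) t.
Proof.
  intros H Ht. destruct (H t Ht) as [Hk Ho].
  pose proof (Hk 1%nat ltac:(lia)) as K1. pose proof (Hk 2%nat ltac:(lia)) as K2'.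
  simpl in K1, K2'. change (Derive (fun x : R => Derive phi x) t + mu t * phi t = 0) in Ho. split; [reflexivity|split; [|split; [exact K1|exact K2']]].
  lra.
Qed.

Lemma part2_back U mu phi0 phi1 c0 c1 c2 f : open2 U -> smooth_on (projx U) mu ->
  second_order_sol (projx U) mu phi0 -> second_order_sol (projx U) mu phi1 ->
  (forall x, projx U x -> f x = - c0 * phi0 x ^ 2 - 2 * c1 * phi0 x * phi1 x - c2 * phi1 x ^ 2) ->
  third_order_sol (projx U) mu f.
Proof.
  intros Ho Hmu S0 S1 Hf x Ix.
  set (d0 := Derive phi0). set (d1 := Derive phi1). set (m1 := Derive mu).
  set (Q := fun s => - c0 * phi0 s ^ 2 - 2 * c1 * phi0 s * phi1 s - c2 * phi1 s ^ 2).
  set (Q1 := fun s => -2 * c0 * phi0 s * d0 s - 2 * c1 * (d0 s * phi1 s + phi0 s * d1 s)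
                      - 2 * c2 * phi1 s * d1 s).
  set (Q2 := fun s => -2 * c0 * (d0 s ^ 2 - mu s * phi0 s ^ 2)
                      - 2 * c1 * (2 * d0 s * d1 s - 2 * mu s * phi0 s * phi1 s)
                      - 2 * c2 * (d1 s ^ 2 - mu s * phi1 s ^ 2)).
  set (Q3 := fun s => -2 * c0 * (-4 * mu s * phi0 s * d0 s - m1 s * phi0 s ^ 2)
                      - 2 * c1 * (-4 * mu s * (d0 s * phi1 s + phi0 s * d1 s) - 2 * m1 s * phi0 s * phi1 s)
                      - 2 * c2 * (-4 * mu s * phi1 s * d1 s - m1 s * phi1 s ^ 2)).
  assert (Hch : forall t, projx U t ->
    is_derive Q t (Q1 t) /\ is_derive Q1 t (Q2 t) /\ is_derive Q2 t (Q3 t)).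
  { intros t It.
    destruct (phi_der _ mu phi0 t S0 It) as [A0 [B0 [C0 D0]]].
    destruct (phi_der _ mu phi1 t S1 It) as [A1 [B1 [C1 D1]]].
    destruct (smooth_cont _ mu t Hmu It) as [_ [_ Xm]].
    assert (Em : Derive (fun x : R => mu x) t = m1 t) by reflexivity.
    assert (Xm' : ex_derive (fun x : R => mu x) t) by exact Xm.
    unfold Q, Q1, Q2, Q3, d0, d1.
    split; [|split]; auto_derive; repeat split; auto;
      rewrite ?A0, ?B0, ?A1, ?B1, ?Em; unfold d0, d1; ring. }
  assert (L : locally x (fun s => Q s = f s)).
  { eapply filter_imp; [|apply (projx_open U Ho x Ix)]. intros s Hs. symmetry. apply Hf, Hs. }
  assert (Lc : locally x (fun t => is_derive Q t (Q1 t) /\ is_derive Q1 t (Q2 t) /\ is_derive Q2 t (Q3 t))).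
  { eapply filter_imp; [|apply (projx_open U Ho x Ix)]. exact Hch. }
  destruct (chain3 Q Q1 Q2 Q3 x Lc) as [K [E1 [E2 E3]]].
  destruct (loc_data f Q x) as [P0 [P1 [P2 [P3 Pk]]]].
  { eapply filter_imp; [|exact L]. intros; now symmetry. }
  split.
  - intros k Hk. apply Pk, K, Hk.
  - rewrite P0, P1, P3, E1, E3. unfold Q, Q1, Q3, m1. ring.
Qed.

Definition Einv (mu f g h : R -> R) (s : R) : R :=
  f s * Derive g s * Derive h s - (Derive f s / 2) * (Derive g s * h s + g s * Derive h s)
  + (Derive_n f 2 s / 2 + mu s * f s) * g s * h s.

Lemma Einv_der I mu f g h t : smooth_on I mu -> third_order_sol I mu f ->
  second_order_sol I mu g -> second_order_sol I mu h -> I t -> is_derive (Einv mu f g h) t 0.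
Proof.
  intros Hmu Hf Sg Sh It.
  destruct (phi_der _ mu g t Sg It) as [A0 [B0 [C0 D0]]].
  destruct (phi_der _ mu h t Sh It) as [A1 [B1 [C1 D1]]].
  destruct (smooth_cont _ mu t Hmu It) as [_ [_ Xm]].
  assert (Xm' : ex_derive (fun x : R => mu x) t) by exact Xm.
  destruct (Hf t It) as [Hk Ho].
  pose proof (Hk 1%nat ltac:(lia)) as K1. pose proof (Hk 2%nat ltac:(lia)) as K2'.
  pose proof (Hk 3%nat ltac:(lia)) as K3. simpl in K1, K2', K3.
  assert (F1 : ex_derive (fun x : R => f x) t) by exact K1.
  assert (F2 : ex_derive (fun x : R => Derive f x) t) by exact K2'.
  assert (F3 : ex_derive (fun x : R => Derive_n f 2 x) t) by exact K3.
  assert (G3 : Derive (fun x : R => Derive_n f 2 x) t = - 4 * mu t * Derive f t - 2 * Derive mu t * f t).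
  { change (Derive_n f 3 t = - 4 * mu t * Derive f t - 2 * Derive mu t * f t). lra. }
  assert (G2 : Derive (fun x : R => Derive f x) t = Derive_n f 2 t) by reflexivity.
  assert (G1 : Derive (fun x : R => f x) t = Derive f t) by reflexivity.
  assert (Gm : Derive (fun x : R => mu x) t = Derive mu t) by reflexivity.
  assert (G3' : Derive (fun x : R => Derive (fun x0 : R => Derive (fun x1 : R => f x1) x0) x) t
     = - 4 * mu t * Derive f t - 2 * Derive mu t * f t) by exact G3.
  assert (G2' : Derive (fun x : R => Derive (fun x0 : R => f x0) x) t = Derive_n f 2 t) by reflexivity.
  unfold Einv. auto_derive. repeat split; auto.
  rewrite ?G1, ?G2, ?G3, ?G3', ?G2', ?Gm, ?A0, ?B0, ?A1, ?B1. field.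
Qed.

Lemma part2_fwd U mu phi0 phi1 f : open2 U -> is_interval (projx U) -> smooth_on (projx U) mu ->
  second_order_sol (projx U) mu phi0 -> second_order_sol (projx U) mu phi1 ->
  (forall x, projx U x -> phi0 x * Derive phi1 x - phi1 x * Derive phi0 x = 1) ->
  third_order_sol (projx U) mu f ->
  exists c0 c1 c2 : R, forall x, projx U x ->
         f x = - c0 * phi0 x ^ 2 - 2 * c1 * phi0 x * phi1 x - c2 * phi1 x ^ 2.
Proof.
  intros Ho HI Hmu S0 S1 HW Hf.
  destruct (classic (exists x0, projx U x0)) as [[x0 I0]|Hne].
  2:{ exists 0, 0, 0. intros x Ix. exfalso. eauto. }
  exists (- Einv mu f phi1 phi1 x0), (Einv mu f phi0 phi1 x0), (- Einv mu f phi0 phi0 x0).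
  intros x Ix.
  assert (C : forall g h, second_order_sol (projx U) mu g -> second_order_sol (projx U) mu h ->
     Einv mu f g h x0 = Einv mu f g h x).
  { intros g h Sg Sh. apply (const_int (projx U)); auto.
    intros t It. apply (Einv_der (projx U)); auto. }
  rewrite (C phi1 phi1), (C phi0 phi1), (C phi0 phi0); auto.
  pose proof (HW x Ix) as W.
  transitivity (f x * (phi0 x * Derive phi1 x - phi1 x * Derive phi0 x) ^ 2).
  { rewrite W. ring. }
  unfold Einv. ring.
Qed.

Theorem mainTheorem6 (U : R -> R -> Prop) (mu : R -> R)
  (hU : domain2 U)
  (hz : forall x z, U x z -> 0 < z)
  (hI : is_interval (projx U))
  (hmu : smooth_on (projx U) mu) :
  (forall a b p : R -> R -> R,
     is_solution U mu a b p <->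
     exists f : R -> R,
       third_order_sol (projx U) mu f /\
       forall x z, U x z ->
         a x z = -1 + f x /\
         b x z = - (1 + mu x * z ^ 2) * f x + z * Derive f x
                 - / 2 * z ^ 2 * Derive_n f 2 x /\
         p x z = 1 - 2 * f x + z * Derive f x)
  /\
  (forall phi0 phi1 : R -> R,
     second_order_sol (projx U) mu phi0 ->
     second_order_sol (projx U) mu phi1 ->
     (forall x, projx U x ->
        phi0 x * Derive phi1 x - phi1 x * Derive phi0 x = 1) ->
     forall f : R -> R,
       third_order_sol (projx U) mu f <->
       exists c0 c1 c2 : R, forall x, projx U x ->
         f x = - c0 * phi0 x ^ 2 - 2 * c1 * phi0 x * phi1 x
               - c2 * phi1 x ^ 2).
Proof.
  split.
  - intros a b p. split.
    + intros Hs. apply forward; auto.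
    + intros [f [Hf Hab]]. apply (backward U mu f); auto. exact (proj1 hU).
  - intros phi0 phi1 S0 S1 HW f. split.
    + intros Hf. apply (part2_fwd U mu phi0 phi1 f); auto. exact (proj1 hU).
    + intros [c0 [c1 [c2 H]]]. apply (part2_back U mu phi0 phi1 c0 c1 c2 f); auto. exact (proj1 hU).
Qed.
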